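(* Let $\Omega\subseteq\mathbb{R}^3$ be open and connected, and let $R\in C^2(\Omega;SO(3))$ be such that $\operatorname{curl}R=\alpha$ for some constant $\alpha\in\mathbb{R}^{3\times3}$. Then $R$ is constant.
   Context: $SO(3)$ is the group of $3\times3$ rotation matrices. For a matrix field $R$, $\operatorname{curl}$ is applied row-wise: $(\operatorname{curl}R)_{ij}=\varepsilon_{jkl}\partial_kR_{il}$ (Einstein summation, $\varepsilon_{jkl}$ the sign of the permutation $(jkl)$). *)

(* Defs.v *)
From HB Require Import structures.
From mathcomp Require Import all_boot all_order all_algebra.
From mathcomp Require Import all_classical all_reals all_analysis.
Set Implicit Arguments. Unset Strict Implicit. Unset Printing Implicit Defensive.
Import Order.TTheory GRing.Theory Num.Theory.
Import numFieldNormedType.Exports.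
Local Open Scope classical_set_scope.
Local Open Scope ring_scope.

Definition evec {R : realType} (k : 'I_3) : 'rV[R]_3 := delta_mx 0 k.

Definition partial {R : realType} (k : 'I_3) (f : 'rV[R]_3 -> R) (x : 'rV[R]_3) : R :=
  'D_(evec k) f x.

Definition C2_on {R : realType} (Omega : set 'rV[R]_3) (f : 'rV[R]_3 -> R) : Prop :=
  forall x, Omega x ->
    {for x, continuous f} /\
    forall k : 'I_3,
      [/\ derivable f x (evec k),
          {for x, continuous (partial k f)} &
          forall l : 'I_3,
            derivable (partial k f) x (evec l) /\
            {for x, continuous (partial l (partial k f))}].

Definition C2_mx_on {R : realType} (Omega : set 'rV[R]_3) (F : 'rV[R]_3 -> 'M[R]_3) : Prop :=
  forall i j : 'I_3, C2_on Omega (fun x => F x i j).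

Definition SO3 {R : realType} (M : 'M[R]_3) : Prop := M^T *m M = 1%:M /\ \det M = 1.

Definition levi_civita {R : realType} (j k l : 'I_3) : R :=
  match nat_of_ord j, nat_of_ord k, nat_of_ord l with
  | 0, 1, 2 | 1, 2, 0 | 2, 0, 1 => 1
  | 0, 2, 1 | 2, 1, 0 | 1, 0, 2 => -1
  | _, _, _ => 0
  end.

Definition curl {R : realType} (F : 'rV[R]_3 -> 'M[R]_3) (x : 'rV[R]_3) : 'M[R]_3 :=
  \matrix_(i < 3, j < 3)
    \sum_(k < 3) \sum_(l < 3) levi_civita j k l * partial k (fun y => F y i l) x.

(* Main.v *)
Require Import Defs.
From HB Require Import structures.
From mathcomp Require Import all_boot all_order all_algebra.
From mathcomp Require Import all_classical all_reals all_analysis.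
From mathcomp Require Import ring lra.
Import Order.TTheory GRing.Theory Num.Theory.
Import numFieldNormedType.Exports.
Local Open Scope classical_set_scope.
Local Open Scope ring_scope.

Section A.
Variable R : realType.
Local Notation V := 'rV[R]_3.

Lemma line_quot (f : V -> R) p v t :
  (fun h : R => h^-1 *: (((fun s : R => f (p + s *: v)) \o shift t) (h *: 1) - f (p + t *: v))) =
  (fun h => h^-1 *: ((f \o shift (p + t *: v)) (h *: v) - f (p + t *: v))).
Proof.
apply/funext => h /=; congr (_ *: (_ - _)); congr f.
by rewrite [h *: 1]mulr1 scalerDl addrCA addrC.
Qed.

Lemma line_derivable (f : V -> R) p v t :
  derivable f (p + t *: v) v -> derivable (fun s : R => f (p + s *: v)) t 1.
Proof. by rewrite /derivable line_quot. Qed.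

Lemma line_derive (f : V -> R) p v t :
  'D_1 (fun s : R => f (p + s *: v)) t = 'D_v f (p + t *: v).
Proof. by rewrite /derive line_quot. Qed.

Lemma mvt_line (f : V -> R) p v h : 0 < h ->
  (forall t, 0 <= t <= h -> derivable f (p + t *: v) v) ->
  exists2 c, 0 <= c <= h & f (p + h *: v) - f p = h * 'D_v f (p + c *: v).
Proof.
move=> h0 der.
set g := fun s : R => f (p + s *: v).
have gder t : 0 <= t <= h -> derivable g t 1 by move=> /der; exact: line_derivable.
have := @MVT R g (fun s => 'D_v f (p + s *: v)) 0 h h0.
case.
- move=> t; rewrite in_itv /= => /andP[t0 th].
  apply: DeriveDef; first by apply: gder; rewrite !ltW.
  exact: line_derive.
- apply: continuous_in_subspaceT => t; rewrite inE /= in_itv /= => /andP[t0 th].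
  apply: differentiable_continuous; apply/derivable1_diffP; apply: gder.
  by rewrite t0 th.
- move=> c; rewrite in_itv /= => /andP[c0 ch] E.
  exists c; first by rewrite !ltW.
  by move: E; rewrite /g scale0r addr0 subr0 mulrC.
Qed.


Lemma shift_quot (f : V -> R) c a v :
  (fun h : R => h^-1 *: (((fun y => f (y + c)) \o shift a) (h *: v) - f (a + c))) =
  (fun h => h^-1 *: ((f \o shift (a + c)) (h *: v) - f (a + c))).
Proof. by apply/funext => h /=; rewrite addrA. Qed.

Lemma shift_derivable (f : V -> R) c a v :
  derivable f (a + c) v -> derivable (fun y => f (y + c)) a v.
Proof. by rewrite /derivable shift_quot. Qed.

Lemma shift_derive (f : V -> R) c a v :
  'D_v (fun y => f (y + c)) a = 'D_v f (a + c).
Proof. by rewrite /derive shift_quot. Qed.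

Lemma delta_mvt (f : V -> R) x j k h : 0 < h ->
  (forall s t, 0 <= s <= h -> 0 <= t <= h ->
     derivable f (x + s *: evec j + t *: evec k) (evec j) /\
     derivable (partial j f) (x + s *: evec j + t *: evec k) (evec k)) ->
  exists s, exists t, [/\ 0 <= s <= h, 0 <= t <= h &
    f (x + h *: evec j + h *: evec k) - f (x + h *: evec j) - f (x + h *: evec k) + f x
      = h ^+ 2 * partial k (partial j f) (x + s *: evec j + t *: evec k)].
Proof.
move=> h0 der.
have hh : 0 <= h <= h by rewrite lexx ltW.
have h00 : 0 <= (0:R) <= h by rewrite lexx ltW.
set g := (fun y => f (y + h *: evec k)) - f.
have := @mvt_line g x (evec j) h h0.
case.
  move=> t th; apply: derivableB.
    by apply: shift_derivable; have [] := der t h th hh.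
  by have [] := der t 0 th h00; rewrite scale0r addr0.
move=> c ch Eg.
have := @mvt_line (partial j f) (x + c *: evec j) (evec k) h h0.
case.
  by move=> t th; have [] := der c t ch th.
move=> d dh Ep.
exists c, d; split => //.
have gE y : g y = f (y + h *: evec k) - f y by [].
move: Eg; rewrite !gE /g deriveB; first last.
- by have [] := der c 0 ch h00; rewrite scale0r addr0.
- by apply: shift_derivable; have [] := der c h ch hh.
rewrite shift_derive -/(partial j f _) -/(partial j f _) Ep => Eg.
rewrite [X in _ = X]mulrA -expr2 in Eg.
rewrite /partial -Eg; ring.
Qed.


Lemma ball_pt2 x j k s t (e : R) : 0 < e -> 0 <= s -> 0 <= t -> s + t < e ->
  ball x e (x + s *: evec j + t *: evec k).
Proof.
move=> e0 s0 t0 ste; split => // i i'.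
rewrite /ball /=.
have -> : (x + s *: evec j + t *: evec k) i i' = x i i' + s * evec j i i' + t * evec k i i'.
  by rewrite !mxE.
rewrite /evec !mxE.
have E : forall a b c : R, a - (a + b + c) = - (b + c) by move=> *; ring.
rewrite E normrN.
case: (_ && _); case: (_ && _); rewrite /= ?(mulr1, mulr0, addr0, add0r).
all: rewrite ?normr0 ?ger0_norm ?addr_ge0 //; lra.
Qed.

Lemma sw4 (A B C D : R) : A - B - C + D = A - C - B + D.
Proof. ring. Qed.

Lemma sub3 (p q r : R) : p - r - (q - r) = p - q.
Proof. ring. Qed.

Lemma contra_lem (ax bx aq bq e : R) : aq = bq -> `|ax - aq| < e -> `|bx - bq| < e ->
  e = `|ax - bx| / 2 -> ax != bx -> False.
Proof.
move=> E A B He nab; rewrite He E in A B.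
have := ler_normB (ax - bq) (bx - bq).
rewrite sub3 => H.
have : 0 < `|ax - bx| by rewrite normr_gt0 subr_eq0.
lra.
Qed.

Lemma schwarz (Om : set V) (f : V -> R) x j k : open Om -> C2_on Om f -> Om x ->
  partial k (partial j f) x = partial j (partial k f) x.
Proof.
move=> oO C2 Ox.
have dd y : Om y -> forall j' k', derivable f y (evec j') /\ derivable (partial j' f) y (evec k').
  by move=> Oy j' k'; have [_ /(_ j') [? _ /(_ k') []]] := C2 y Oy.
set a := partial k (partial j f); set b := partial j (partial k f).
apply/eqP; apply/negPn/negP => neq.
have e0 : 0 < `|a x - b x| / 2 by rewrite divr_gt0 // normr_gt0 subr_eq0.
set e := `|a x - b x| / 2 in e0.
have ca : {for x, continuous a} by have [_ /(_ j) [_ _ /(_ k) []]] := C2 x Ox.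
have cb : {for x, continuous b} by have [_ /(_ k) [_ _ /(_ j) []]] := C2 x Ox.
have n1 : \forall y \near x, Om y by apply: open_nbhs_nbhs; split.
have n2 : \forall y \near x, `|a x - a y| < e by exact: (@cvgr_dist_lt _ _ _ (nbhs x) _ a (a x) ca e e0).
have n3 : \forall y \near x, `|b x - b y| < e by exact: (@cvgr_dist_lt _ _ _ (nbhs x) _ b (b x) cb e e0).
have nb : nbhs x (fun y => Om y /\ (`|a x - a y| < e /\ `|b x - b y| < e)).
  exact: (filterI n1 (filterI n2 n3)).
have [d d0 dP] := (nbhs_ballP x _).1 nb.
have h0 : 0 < d / 3 by rewrite divr_gt0.
set h := d / 3 in h0.
have inb s t j' k' : 0 <= s <= h -> 0 <= t <= h ->
    Om (x + s *: evec j' + t *: evec k') /\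
        (`|a x - a (x + s *: evec j' + t *: evec k')| < e /\
        `|b x - b (x + s *: evec j' + t *: evec k')| < e).
  move=> /andP[s0 sh] /andP[t0 th]; apply: dP; apply: ball_pt2 => //.
  rewrite /h in sh th; have d0' : (0 : R) < d by []; lra.
have := @delta_mvt f x j k h h0; case.
  by move=> s t sh th; have [Oy _] := inb s t j k sh th; exact: dd.
move=> s1 [t1 [s1h t1h E1]].
have := @delta_mvt f x k j h h0; case.
  by move=> s t sh th; have [Oy _] := inb s t k j sh th; exact: dd.
move=> s2 [t2 [s2h t2h E2]].
have E : a (x + s1 *: evec j + t1 *: evec k) = b (x + s2 *: evec k + t2 *: evec j).
  have hn : h ^+ 2 != 0 by rewrite expf_neq0 // gt_eqF.
  have Ejk : x + h *: evec k + h *: evec j = x + h *: evec j + h *: evec k.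
    by rewrite addrAC.
  apply: (mulfI hn); apply: (etrans (esym E1)); apply: (etrans _ E2).
  rewrite Ejk; exact: sw4.
have [_ [A1 _]] := inb s1 t1 j k s1h t1h.
have [_ [_ B2]] := inb s2 t2 k j s2h t2h.
exact: (@contra_lem _ _ _ _ _ E A1 B2 erefl neq).
Qed.


Notation i0 := (@Ordinal 3 0 isT).
Notation i1 := (@Ordinal 3 1 isT).
Notation i2 := (@Ordinal 3 2 isT).

Lemma ord3P (i : 'I_3) : [\/ i = i0, i = i1 | i = i2].
Proof.
case: i => [[|[|[|m]]] Hi]; first by constructor 1; apply: val_inj.
- by constructor 2; apply: val_inj.
- by constructor 3; apply: val_inj.
- by [].
Qed.

Lemma decomp (y z : V) : z = y + (z 0 i0 - y 0 i0) *: evec i0 + (z 0 i1 - y 0 i1) *: evec i1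
   + (z 0 i2 - y 0 i2) *: evec i2.
Proof.
apply/rowP => i; rewrite !mxE /=.
case: (ord3P i) => ->; rewrite -!val_eqE /=; ring.
Qed.

Lemma ball_pt3 (y : V) (a b c r : R) : `|a| < r -> `|b| < r -> `|c| < r ->
  ball y r (y + a *: evec i0 + b *: evec i1 + c *: evec i2).
Proof.
move=> ar br cr.
have r0 : 0 < r by apply: le_lt_trans ar.
split => // i i'.
rewrite /ball /=.
have -> : (y + a *: evec i0 + b *: evec i1 + c *: evec i2) i i' =
   y i i' + a * evec i0 i i' + b * evec i1 i i' + c * evec i2 i i' by rewrite !mxE.
rewrite /evec !mxE (ord1 i) eqxx /=.
have E : forall p q s t : R, p - (p + q + s + t) = - (q + s + t) by move=> *; ring.
rewrite E normrN.
by case: (ord3P i') => ->; rewrite -!val_eqE /= !(mulr1, mulr0, addr0, add0r).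
Qed.

Lemma zero_line (f : V -> R) p v d :
  (forall t, `|t| <= `|d| -> derivable f (p + t *: v) v /\ 'D_v f (p + t *: v) = 0) ->
  f (p + d *: v) = f p.
Proof.
move=> H.
case: (ltgtP d 0) => [dlt|dgt|->]; last by rewrite scale0r addr0.
- have md : 0 < - d by rewrite oppr_gt0.
  have := @mvt_line f (p + d *: v) v (- d) md.
  case.
    move=> t /andP[t0 tm].
    have [|Hd _] := H (d + t).
      by rewrite [`|d|]ltr0_norm // ler_norml; apply/andP; split; lra.
    by rewrite scalerDl addrA in Hd.
  move=> c /andP[c0 cm].
  have [|_ Hz] := H (d + c).
    by rewrite [`|d|]ltr0_norm // ler_norml; apply/andP; split; lra.
  rewrite scalerDl addrA in Hz.
  rewrite Hz mulr0 -addrA -scalerDl addrN scale0r addr0 => /eqP.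
  by rewrite subr_eq0 => /eqP.
- have := @mvt_line f p v d dgt.
  case.
    move=> t /andP[t0 tm]; have [|Hd _] := H t; last exact: Hd.
    by rewrite [`|d|]gtr0_norm // ger0_norm.
  move=> c /andP[c0 cm].
  have [|_ ->] := H c; first by rewrite [`|d|]gtr0_norm // ger0_norm.
  by rewrite mulr0 => /eqP; rewrite subr_eq0 => /eqP.
Qed.

Lemma loc_const (Om : set V) (f : V -> R) : open Om ->
  (forall y, Om y -> forall k, derivable f y (evec k) /\ partial k f y = 0) ->
  forall y, Om y -> exists2 r, 0 < r & forall z, ball y r z -> f z = f y.
Proof.
move=> oO H y Oy.
have : nbhs y Om by apply: open_nbhs_nbhs; split.
move=> /(nbhs_ballP y Om) [r r0 rO].
exists r => // z yz.
have dz i : `|z 0 i - y 0 i| < r.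
  by case: yz => _ /(_ 0 i); rewrite /ball /= distrC.
rewrite (decomp y z).
set d0 := z 0 i0 - y 0 i0; set d1 := z 0 i1 - y 0 i1; set d2 := z 0 i2 - y 0 i2.
have inO a b c : `|a| <= `|d0| -> `|b| <= `|d1| -> `|c| <= `|d2| ->
   Om (y + a *: evec i0 + b *: evec i1 + c *: evec i2).
  move=> ha hb hc; apply: rO; apply: ball_pt3.
  - exact: le_lt_trans ha (dz i0).
  - exact: le_lt_trans hb (dz i1).
  - exact: le_lt_trans hc (dz i2).
have n0 : `|0 : R| <= `|d0| by rewrite normr0.
have n1 : `|0 : R| <= `|d1| by rewrite normr0.
have n2 : `|0 : R| <= `|d2| by rewrite normr0.
rewrite zero_line; last by move=> t ht; apply: H; apply: inO.
rewrite zero_line; last first.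
  by move=> t ht; apply: H; have := inO d0 t 0 (lexx _) ht n2; rewrite scale0r addr0.
rewrite zero_line //.
by move=> t ht; apply: H; have := inO t 0 0 ht n1 n2; rewrite !scale0r !addr0.
Qed.

Lemma conn_const (Om : set V) (f : V -> R) : connected Om ->
  (forall y, Om y -> exists2 r, 0 < r & forall z, ball y r z -> f z = f y) ->
  forall x y, Om x -> Om y -> f x = f y.
Proof.
move=> cO loc x y Ox Oy.
set B := [set w | Om w /\ f w = f x].
suff BO : B = Om by move: Oy; rewrite -BO; case=> _ ->.
apply: cO.
- by exists x.
- exists (interior [set w | f w = f x]); first exact: open_interior.
  apply/seteqP; split => w.
    move=> [Ow fw]; split => //.
    have [r r0 rb] := loc w Ow.
    apply/(nbhs_ballP w).
    by exists r => // z /rb fz /=; rewrite fz fw.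
  by move=> [Ow /nbhs_singleton fw].
- exists (~` interior [set w | f w != f x]); first exact/open_closedC/open_interior.
  apply/seteqP; split => w.
    move=> [Ow fw]; split => // /nbhs_singleton /=.
    by rewrite fw eqxx.
  move=> [Ow nI]; split => //.
  apply/eqP; apply/negPn/negP => ne; apply: nI.
  have [r r0 rb] := loc w Ow.
  apply/(nbhs_ballP w).
  by exists r => // z /rb fz /=; rewrite fz.
Qed.

Lemma derivable_sum3 (g : 'I_3 -> V -> R) y v : (forall i, derivable (g i) y v) ->
  derivable (fun z => \sum_(i < 3) g i z) y v.
Proof.
move=> H; have -> : (fun z => \sum_(i < 3) g i z) = \sum_(i < 3) g i.
  by apply/funext => z; rewrite fct_sumE.
exact: derivable_sum.
Qed.

Lemma derive_sum3 (g : 'I_3 -> V -> R) y v : (forall i, derivable (g i) y v) ->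
  'D_v (fun z => \sum_(i < 3) g i z) y = \sum_(i < 3) 'D_v (g i) y.
Proof.
move=> H; have -> : (fun z => \sum_(i < 3) g i z) = \sum_(i < 3) g i.
  by apply/funext => z; rewrite fct_sumE.
exact: derive_sum.
Qed.

Lemma deriveM_fun (f g : V -> R) y v : derivable f y v -> derivable g y v ->
  'D_v (fun z => f z * g z) y = f y * 'D_v g y + g y * 'D_v f y.
Proof. by move=> df dg; have := deriveM df dg. Qed.

Lemma derivableM_fun (f g : V -> R) y v : derivable f y v -> derivable g y v ->
  derivable (fun z => f z * g z) y v.
Proof. by move=> df dg; have := derivableM df dg. Qed.

Lemma deriveB_fun (f g : V -> R) y v : derivable f y v -> derivable g y v ->
  'D_v (fun z => f z - g z) y = 'D_v f y - 'D_v g y.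
Proof. by move=> df dg; have := deriveB df dg. Qed.

Lemma derivableB_fun (f g : V -> R) y v : derivable f y v -> derivable g y v ->
  derivable (fun z => f z - g z) y v.
Proof. by move=> df dg; have := derivableB df dg. Qed.

Lemma deriveMl_fun (f : V -> R) (c : R) y v : derivable f y v ->
  'D_v (fun z => c * f z) y = c * 'D_v f y.
Proof.
move=> df.
have dc : derivable (fun=> c : R) y v := derivable_cst c y v.
rewrite (deriveM_fun _ _ _ _ dc df).
by rewrite (_ : 'D_v (fun=> c) y = 0) ?mulr0 ?addr0 //; exact: derive_cst.
Qed.

Lemma derivableMl_fun (f : V -> R) (c : R) y v : derivable f y v ->
  derivable (fun z => c * f z) y v.
Proof. by move=> df; apply: derivableM_fun => //; exact: (derivable_cst c y v). Qed.


Definition dF (F : V -> 'M[R]_3) (k : 'I_3) (y : V) : 'M[R]_3 :=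
  \matrix_(m, l) partial k (fun z => F z m l) y.

Lemma skew_pt (Om : set V) F y : open Om -> C2_mx_on Om F ->
  (forall z, Om z -> SO3 (F z)) -> Om y ->
  forall k, (F y)^T *m dF F k y + (dF F k y)^T *m F y = 0.
Proof.
move=> oO C2 SO Oy k.
have der m l : derivable (fun z => F z m l) y (evec k).
  by have [_ /(_ k) [d _ _]] := C2 m l y Oy.
apply/matrixP => a b.
have G : 'D_(evec k) (fun z => \sum_(m < 3) F z m a * F z m b) y = 0.
  rewrite (@near_eq_derive R V R _ (cst ((1%:M : 'M[R]_3) a b))); first exact: derive_cst.
  have : nbhs y Om by apply: open_nbhs_nbhs; split.
  apply: filterS => z Oz.
  have [E _] := SO z Oz.
  by rewrite /cst -E mxE; apply: eq_bigr => m _; rewrite mxE.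
rewrite derive_sum3 in G; last by move=> m; apply: derivableM_fun.
rewrite (eq_bigr (fun m => F y m a * partial k (fun z => F z m b) y +
    F y m b * partial k (fun z => F z m a) y)) in G; last first.
  by move=> m _; exact: (deriveM_fun _ _ _ _ (der m a) (der m b)).
rewrite !mxE -big_split /=; apply: (etrans _ G); apply: eq_bigr => m _; rewrite !mxE /partial; ring.
Qed.



Lemma ord3P' (i : 'I_3) :
  [\/ i = ord0, i = lift ord0 ord0 | i = lift ord0 (lift ord0 ord0)].
Proof.
case: i => [[|[|[|m]]] Hi]; first by constructor 1; apply: val_inj.
- by constructor 2; apply: val_inj.
- by constructor 3; apply: val_inj.
- by [].
Qed.

Definition curlM (P : 'I_3 -> 'M[R]_3) : 'M[R]_3 :=
  \matrix_(i < 3, j < 3) \sum_(k < 3) \sum_(l < 3) levi_civita j k l * P k i l.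

Definition Upt (M : 'M[R]_3) (P : 'I_3 -> 'M[R]_3) (p : 'I_3) : R :=
  \sum_(k < 3) \sum_(m < 3) (M m p * P k m k - M m k * P k m p).

Definition Npt (M : 'M[R]_3) (al : 'M[R]_3) (p : 'I_3) : R :=
  \sum_(c < 3) \sum_(a < 3) \sum_(b < 3) levi_civita p c a * M b c * al b a.

Definition Sx (M : 'M[R]_3) (P : 'I_3 -> 'M[R]_3) k a b : R :=
  \sum_(m < 3) (M m a * P k m b + P k m a * M m b).

Lemma UN_key M P p :
  2 * Npt M (curlM P) p - Upt M P p = \sum_(c < 3) Sx M P p c c - \sum_(k < 3) Sx M P k k p.
Proof.
rewrite /Npt /Upt /curlM /Sx.
rewrite !big_ord_recl !big_ord0 !mxE !big_ord_recl !big_ord0.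
case: (ord3P' p) => ->; rewrite /levi_civita /=; ring.
Qed.

End A.
Arguments dF {R}.
Arguments curlM {R}.
Arguments Upt {R}.
Arguments Npt {R}.
Arguments Sx {R}.
Arguments UN_key {R}.
Arguments skew_pt {R Om F y}.
Arguments schwarz {R Om f x}.


Section B.
Variable R : realType.
Local Notation V := 'rV[R]_3.

Lemma derivable_sum33 (g : 'I_3 -> 'I_3 -> V -> R) y v :
  (forall i j, derivable (g i j) y v) ->
  derivable (fun z => \sum_(i < 3) \sum_(j < 3) g i j z) y v.
Proof.
move=> H; apply: (@derivable_sum3 R (fun i z => \sum_(j < 3) g i j z)) => i.
exact: derivable_sum3.
Qed.

Lemma derive_sum33 (g : 'I_3 -> 'I_3 -> V -> R) y v :
  (forall i j, derivable (g i j) y v) ->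
  'D_v (fun z => \sum_(i < 3) \sum_(j < 3) g i j z) y =
  \sum_(i < 3) \sum_(j < 3) 'D_v (g i j) y.
Proof.
move=> H; rewrite (@derive_sum3 R (fun i z => \sum_(j < 3) g i j z)).
  by apply: eq_bigr => i _; rewrite derive_sum3.
by move=> i; exact: derivable_sum3.
Qed.

Lemma derivable_sum333 (g : 'I_3 -> 'I_3 -> 'I_3 -> V -> R) y v :
  (forall i j k, derivable (g i j k) y v) ->
  derivable (fun z => \sum_(i < 3) \sum_(j < 3) \sum_(k < 3) g i j k z) y v.
Proof.
move=> H; apply: (@derivable_sum3 R (fun i z => \sum_(j < 3) \sum_(k < 3) g i j k z)) => i.
exact: derivable_sum33.
Qed.

Lemma derive_sum333 (g : 'I_3 -> 'I_3 -> 'I_3 -> V -> R) y v :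
  (forall i j k, derivable (g i j k) y v) ->
  'D_v (fun z => \sum_(i < 3) \sum_(j < 3) \sum_(k < 3) g i j k z) y =
  \sum_(i < 3) \sum_(j < 3) \sum_(k < 3) 'D_v (g i j k) y.
Proof.
move=> H; rewrite (@derive_sum3 R (fun i z => \sum_(j < 3) \sum_(k < 3) g i j k z)).
  by apply: eq_bigr => i _; rewrite derive_sum33.
by move=> i; exact: derivable_sum33.
Qed.

Lemma derive_cfc (f : V -> R) (c1 c2 : R) y v : derivable f y v ->
  'D_v (fun z => c1 * f z * c2) y = c1 * 'D_v f y * c2.
Proof.
move=> df.
have -> : (fun z => c1 * f z * c2) = (fun z => (c1 * c2) * f z).
  by apply/funext => z; rewrite mulrAC.
by rewrite deriveMl_fun // mulrAC.
Qed.

Lemma derivable_cfc (f : V -> R) (c1 c2 : R) y v : derivable f y v ->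
  derivable (fun z => c1 * f z * c2) y v.
Proof.
move=> df.
have -> : (fun z => c1 * f z * c2) = (fun z => (c1 * c2) * f z).
  by apply/funext => z; rewrite mulrAC.
exact: derivableMl_fun.
Qed.

End B.


Section C.
Variable R : realType.
Local Notation V := 'rV[R]_3.

Lemma curlE (F : V -> 'M[R]_3) z : curl F z = curlM (fun k => dF F k z).
Proof.
apply/matrixP => i j; rewrite !mxE; apply: eq_bigr => k _; apply: eq_bigr => l _.
by rewrite mxE.
Qed.

Lemma Sx_mx (M : 'M[R]_3) P k a b : Sx M P k a b = (M^T *m P k + (P k)^T *m M) a b.
Proof.
rewrite /Sx !mxE -big_split /=; apply: eq_bigr => m _; rewrite !mxE //.
Qed.

Lemma U_pt (Om : set V) F al z : open Om -> C2_mx_on Om F ->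
  (forall y, Om y -> SO3 (F y)) -> (forall y, Om y -> curl F y = al) -> Om z ->
  forall p, Upt (F z) (fun k => dF F k z) p = 2 * Npt (F z) al p.
Proof.
move=> oO C2 SO cu Oz p.
have := UN_key (F z) (fun k => dF F k z) p.
have S0 k a b : Sx (F z) (fun k => dF F k z) k a b = 0.
  by rewrite Sx_mx (skew_pt oO C2 SO Oz k) mxE.
rewrite !big1 // ?subr0 -?curlE ?cu //.
by move/eqP; rewrite subr_eq0 => /eqP.
Qed.


Lemma divN (Om : set V) F al x p : C2_mx_on Om F -> Om x ->
  partial p (fun z => Npt (F z) al p) x =
  \sum_(c < 3) \sum_(a < 3) \sum_(b < 3) levi_civita p c a * dF F p x b c * al b a.
Proof.
move=> C2 Ox.
have d1 m l k : derivable (fun z => F z m l) x (evec k).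
  by have [_ /(_ k) [d _ _]] := C2 m l x Ox.
rewrite /partial /Npt.
rewrite (@derive_sum333 R (fun c a b z => levi_civita p c a * F z b c * al b a)); last first.
  by move=> c a b; apply: derivable_cfc.
apply: eq_bigr => c _; apply: eq_bigr => a _; apply: eq_bigr => b _.
by rewrite derive_cfc // mxE.
Qed.

Lemma divU (Om : set V) F x p : C2_mx_on Om F -> Om x ->
  partial p (fun z => Upt (F z) (fun k => dF F k z) p) x =
  \sum_(k < 3) \sum_(m < 3)
    ((F x m p * partial p (partial k (fun z => F z m k)) x +
      dF F k x m k * dF F p x m p) -
     (F x m k * partial p (partial k (fun z => F z m p)) x +
      dF F k x m p * dF F p x m k)).
Proof.
move=> C2 Ox.
have d1 m l k : derivable (fun z => F z m l) x (evec k).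
  by have [_ /(_ k) [d _ _]] := C2 m l x Ox.
have d2 m l k j : derivable (partial k (fun z => F z m l)) x (evec j).
  by have [_ /(_ k) [_ _ /(_ j) [d _]]] := C2 m l x Ox.
have -> : (fun z => Upt (F z) (fun k => dF F k z) p) =
  (fun z => \sum_(k < 3) \sum_(m < 3) (F z m p * partial k (fun z => F z m k) z -
        F z m k * partial k (fun z => F z m p) z)).
  apply/funext => z; rewrite /Upt; apply: eq_bigr => k _; apply: eq_bigr => m _.
  by rewrite !mxE.
rewrite /partial.
rewrite (@derive_sum33 R (fun k m z => F z m p * partial k (fun z => F z m k) z -
        F z m k * partial k (fun z => F z m p) z)); last first.
  move=> k m; apply: derivableB_fun; apply: derivableM_fun => //.
apply: eq_bigr => k _; apply: eq_bigr => m _.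
rewrite deriveB_fun; last first.
- by apply: derivableM_fun.
- by apply: derivableM_fun.
by rewrite !deriveM_fun // !mxE.
Qed.

End C.


Section D.
Variable R : realType.

Lemma sos9 (t x0 x1 x2 y0 y1 y2 z0 z1 z2 : R) :
  t^+2 + 3*(z0^+2 + y1^+2 + x2^+2) + (y0^+2 + z1^+2 + (y0 - z1)^+2) + (x0^+2 + z2^+2 + (x0 + z2)^+2)
   + (x1^+2 + y2^+2 + (y2 - x1)^+2) = 0 ->
  [/\ x0 = 0, x1 = 0 & x2 = 0] /\ [/\ y0 = 0, y1 = 0 & y2 = 0] /\ [/\ z0 = 0, z1 = 0 & z2 = 0].
Proof.
move=> H.
have sq (u : R) : 0 <= u^+2 by exact: sqr_ge0.
have := sq t; have := sq z0; have := sq y1; have := sq x2; have := sq y0; have := sq z1;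
have := sq (y0 - z1); have := sq x0; have := sq z2; have := sq (x0 + z2); have := sq x1;
have := sq y2; have := sq (y2 - x1).
move: (t^+2) (y0 - z1) (x0 + z2) (y2 - x1) H => T A B C H *.
have z : forall u : R, u^+2 <= 0 -> u = 0.
  by move=> u hu; apply/eqP; rewrite -sqrf_eq0; apply/eqP/le_anti; rewrite hu sq.
by split; [split|split;split]; apply: z; lra.
Qed.

Lemma eq_from (a b c : R) : a = b -> c = b - a -> c = 0.
Proof. by move=> -> ->; rewrite subrr. Qed.

Definition Qf (P : 'I_3 -> 'M[R]_3) : R :=
  \sum_(p < 3) \sum_(k < 3) \sum_(m < 3) (P k m k * P p m p - P k m p * P p m k).
Definition C2f (P : 'I_3 -> 'M[R]_3) : R :=
  \sum_(b < 3) \sum_(a < 3) curlM P b a * curlM P b a.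

Notation j0 := (ord0 : 'I_3).
Notation j1 := (lift ord0 ord0 : 'I_3).
Notation j2 := (lift ord0 (lift ord0 ord0) : 'I_3).

Lemma skew_zero (W : 'I_3 -> 'M[R]_3) : (forall k, (W k)^T = - W k) ->
  Qf W = 2 * C2f W -> forall k, W k = 0.
Proof.
move=> sk0 H.
have sk k a b : W k b a = - W k a b.
  by have := congr1 (fun M : 'M[R]_3 => M a b) (sk0 k); rewrite !mxE.
have dg k a : W k a a = 0.
  have := sk k a a; move/eqP; rewrite -subr_eq0 opprK -mulr2n mulrn_eq0 /= => /eqP //.
move: H; rewrite /Qf /C2f /curlM.
rewrite !big_ord_recl !big_ord0 !mxE !big_ord_recl !big_ord0 /levi_civita /=.
rewrite !(sk _ j0 j1) !(sk _ j0 j2) !(sk _ j1 j2) !dg => H.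
have := sos9 (- W j0 j1 j2 + W j1 j0 j2 - W j2 j0 j1)
  (W j0 j0 j1) (W j1 j0 j1) (W j2 j0 j1)
  (W j0 j0 j2) (W j1 j0 j2) (W j2 j0 j2)
  (W j0 j1 j2) (W j1 j1 j2) (W j2 j1 j2).
case.
  by apply: (@eq_from _ _ _ H); ring.
move=> [[A0 A1 A2] [[B0 B1 B2] [C0 C1 C2]]] k; apply/matrixP => a b; rewrite [RHS]mxE.
case: (ord3P' k) => ->; case: (ord3P' a) => ->; case: (ord3P' b) => ->;
  rewrite ?dg ?(sk _ j0 j1) ?(sk _ j0 j2) ?(sk _ j1 j2)
    ?A0 ?A1 ?A2 ?B0 ?B1 ?B2 ?C0 ?C1 ?C2 ?oppr0 //.
Qed.


Lemma Qf_mx (P : 'I_3 -> 'M[R]_3) :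
  Qf P = \sum_(p < 3) \sum_(k < 3) (((P k)^T *m P p) k p - ((P k)^T *m P p) p k).
Proof.
rewrite /Qf; apply: eq_bigr => p _; apply: eq_bigr => k _.
by rewrite sumrB !mxE; congr (_ - _); apply: eq_bigr => m _; rewrite !mxE.
Qed.

Lemma Qf_rot (M : 'M[R]_3) W : M^T *m M = 1%:M -> Qf (fun k => M *m W k) = Qf W.
Proof.
move=> HM; rewrite !Qf_mx.
have E k p : (M *m W k)^T *m (M *m W p) = (W k)^T *m W p.
  by rewrite trmx_mul -mulmxA (mulmxA M^T) HM mul1mx.
by apply: eq_bigr => p _; apply: eq_bigr => k _; rewrite E.
Qed.

Lemma curl_rot (M : 'M[R]_3) W : curlM (fun k => M *m W k) = M *m curlM W.
Proof.
apply/matrixP => i j; rewrite !mxE.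
rewrite !big_ord_recl !big_ord0 !mxE !big_ord_recl !big_ord0.
case: (ord3P' j) => ->; rewrite /levi_civita /=; ring.
Qed.

Lemma C2f_mx P : C2f P = \sum_(a < 3) ((curlM P)^T *m curlM P) a a.
Proof.
rewrite /C2f exchange_big; apply: eq_bigr => a _; rewrite mxE.
by apply: eq_bigr => b _; rewrite !mxE.
Qed.

Lemma C2f_rot (M : 'M[R]_3) W : M^T *m M = 1%:M -> C2f (fun k => M *m W k) = C2f W.
Proof.
move=> HM; rewrite !C2f_mx curl_rot.
by rewrite trmx_mul -mulmxA (mulmxA M^T) HM mul1mx.
Qed.

Lemma final_alg (M : 'M[R]_3) P : M^T *m M = 1%:M ->
  (forall k, M^T *m P k + (P k)^T *m M = 0) -> Qf P = 2 * C2f P -> forall k, P k = 0.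
Proof.
move=> HM sk H.
have MMt : M *m M^T = 1%:M by apply: mulmx1C.
pose W k := M^T *m P k.
have PW : P = (fun k => M *m W k).
  by apply/funext => k; rewrite /W mulmxA MMt mul1mx.
have skW k : (W k)^T = - W k.
  rewrite /W trmx_mul trmxK; apply/eqP; rewrite -subr_eq0 opprK addrC; apply/eqP.
  exact: sk.
rewrite PW Qf_rot // C2f_rot // in H.
move=> k; rewrite PW (@skew_zero W skW H k) mulmx0 //.
Qed.

Lemma Tcancel (M : 'M[R]_3) (P : 'I_3 -> 'M[R]_3) (S : 'I_3 -> 'I_3 -> 'I_3 -> 'I_3 -> R) :
  (forall p k m l, S p k m l = S k p m l) ->
  \sum_(p < 3) \sum_(k < 3) \sum_(m < 3)
    ((M m p * S p k m k + P k m k * P p m p) - (M m k * S p k m p + P k m p * P p m k))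
  = Qf P.
Proof.
move=> HS; rewrite /Qf.
rewrite !big_ord_recl !big_ord0.
rewrite !(HS j1 j0) !(HS j2 j0) !(HS j2 j1).
ring.
Qed.

Lemma Ncontract (P : 'I_3 -> 'M[R]_3) :
  \sum_(p < 3) \sum_(c < 3) \sum_(a < 3) \sum_(b < 3)
     levi_civita p c a * P p b c * curlM P b a = C2f P.
Proof.
rewrite /C2f /curlM.
rewrite !big_ord_recl !big_ord0 !mxE !big_ord_recl !big_ord0 /levi_civita /=.
ring.
Qed.

End D.


Section E.
Variable R : realType.
Local Notation V := 'rV[R]_3.

Lemma nderivable (Om : set V) F al x p : C2_mx_on Om F -> Om x ->
  derivable (fun z => Npt (F z) al p) x (evec p).
Proof.
move=> C2 Ox.
have d1 m l k : derivable (fun z => F z m l) x (evec k).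
  by have [_ /(_ k) [d _ _]] := C2 m l x Ox.
rewrite /Npt.
apply: (@derivable_sum333 R (fun c a b z => levi_civita p c a * F z b c * al b a)).
by move=> c a b; apply: derivable_cfc.
Qed.

Lemma Pzero (Om : set V) F al x : open Om -> C2_mx_on Om F ->
  (forall y, Om y -> SO3 (F y)) -> (forall y, Om y -> curl F y = al) -> Om x ->
  forall k, dF F k x = 0.
Proof.
move=> oO C2 SO cu Ox.
apply: (@final_alg R (F x) (fun k => dF F k x)).
- by have [] := SO x Ox.
- by move=> k; exact: (skew_pt oO C2 SO Ox k).
have E1 : \sum_(p < 3) partial p (fun z => Upt (F z) (fun k => dF F k z) p) x =
    2 * \sum_(p < 3) partial p (fun z => Npt (F z) al p) x.
  rewrite mulr_sumr; apply: eq_bigr => p _.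
  have h1 : 'D_(evec p) (fun z => Upt (F z) (fun k => dF F k z) p) x =
      'D_(evec p) (fun z => 2 * Npt (F z) al p) x.
    apply: near_eq_derive.
    have : nbhs x Om by apply: open_nbhs_nbhs; split.
    by apply: filterS => z Oz; exact: (@U_pt R Om F al z oO C2 SO cu Oz p).
  rewrite /partial h1 deriveMl_fun //.
  exact: nderivable.
have HS p k m l : partial p (partial k (fun z => F z m l)) x =
    partial k (partial p (fun z => F z m l)) x.
  exact: (schwarz k p oO (C2 m l) Ox).
rewrite (eq_bigr _ (fun p _ => @divU R Om F x p C2 Ox)) in E1.
rewrite (@Tcancel R (F x) (fun k => dF F k x)
   (fun p k m l => partial p (partial k (fun z => F z m l)) x) HS) in E1.
rewrite E1; congr (_ * _).
rewrite (eq_bigr _ (fun p _ => @divN R Om F al x p C2 Ox)).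
by rewrite -(cu x Ox) curlE Ncontract.
Qed.

End E.

Theorem theorem4p4 (R : realType) (Omega : set 'rV[R]_3)
  (F : 'rV[R]_3 -> 'M[R]_3) (alpha : 'M[R]_3) :
  open Omega -> connected Omega ->
  C2_mx_on Omega F ->
  (forall x, Omega x -> SO3 (F x)) ->
  (forall x, Omega x -> curl F x = alpha) ->
  forall x y, Omega x -> Omega y -> F x = F y.
Proof.
move=> oO cO C2 SO cu x y Ox Oy.
apply/matrixP => i j.
have H : forall z, Omega z -> forall k, derivable (fun w => F w i j) z (evec k) /\
    partial k (fun w => F w i j) z = 0.
  move=> z Oz k; split; first by have [_ /(_ k) [d _ _]] := C2 i j z Oz.
  have := congr1 (fun M : 'M[R]_3 => M i j) (@Pzero R Omega F alpha z oO C2 SO cu Oz k).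
  by rewrite !mxE.
exact: (@conn_const R Omega (fun w => F w i j) cO (@loc_const R Omega _ oO H) x y Ox Oy).
Qed.
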